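(* Fix an agent $i\in\mathit{Agt}$. For each operator $O\in\{\mathcal{A}_i,\mathcal{R}_i,\mathcal{A}^{\mathsf{real}}_i,\mathcal{R}^{\mathsf{real}}_i\}$ the operator $O$ is not expressible by means of the other modalities of $\mathcal{L}$ (including each other): there exist an atom $p\in\mathit{Atm}$ such that no formula $\varphi\in\mathcal{L}$ in which no operator of the same kind as $O$ occurs (i.e. no $\mathcal{A}_j$ if $O=\mathcal{A}_i$, no $\mathcal{R}_j$ if $O=\mathcal{R}_i$, no $\mathcal{A}^{\mathsf{real}}_j$ if $O=\mathcal{A}^{\mathsf{real}}_i$, no $\mathcal{R}^{\mathsf{real}}_j$ if $O=\mathcal{R}^{\mathsf{real}}_i$, for any agent $j$) satisfies $\models O\,p\leftrightarrow\varphi$.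
   Context: Let $\mathit{Agt}=\{1,\dots,n\}$ be a finite set of agents and $\mathit{Atm}$ a countably infinite set of atoms containing, for each $i\in\mathit{Agt}$, special atoms $\mathsf{rew}_i$ (''$i$ gets a reward'') and $\mathsf{pun}_i$ (''$i$ gets a punishment''). The language $\mathcal{L}_0$ is given by $\alpha::=p\mid\neg\alpha\mid\alpha\wedge\alpha\mid \triangle_i\alpha$ ($p\in\mathit{Atm}$, $i\in\mathit{Agt}$; $\triangle_i\alpha$ = ''$i$ explicitly believes $\alpha$''); $\to,\vee,\leftrightarrow,\top,\bot$ are the usual abbreviations. A state is a tuple $S=((B_i)_{i\in\mathit{Agt}},V)$ with $B_i\subseteq\mathcal{L}_0$ (belief base) and $V\subseteq\mathit{Atm}$; $\mathbf{S}$ is the set of all states. Truth of $\mathcal{L}_0$-formulas: $S\models p$ iff $p\in V$; Boolean clauses as usual; $S\models\triangle_i\alpha$ iff $\alpha\in B_i$. Define $\mathit{Des}_i(S)=\{\alpha\in\mathcal{L}_0:(\alpha\to\mathsf{rew}_i)\in B_i\}$ and $\mathit{Und}_i(S)=\{\alpha\in\mathcal{L}_0:(\alpha\to\mathsf{pun}_i)\in B_i\}$. Relations on $\mathbf{S}$: $S\,\mathcal{E}_i\,S'$ iff $S'\models\alpha$ for all $\alpha\in B_i$ (where $B_i$ is $i$'s base in $S$); $S\,\mathcal{A}_i\,S'$ iff $S'\models\alpha$ for some $\alpha\in\mathit{Des}_i(S)$; $S\,\mathcal{R}_i\,S'$ iff $S'\models\alpha$ for some $\alpha\in\mathit{Und}_i(S)$.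 A model is a pair $(S,U)$ with $S\in U\subseteq\mathbf{S}$. The language $\mathcal{L}$ is $\varphi::=\alpha\mid\neg\varphi\mid\varphi\wedge\varphi\mid\Box_i\varphi\mid\mathcal{A}_i\varphi\mid\mathcal{R}_i\varphi\mid\mathcal{A}^{\mathsf{real}}_i\varphi\mid\mathcal{R}^{\mathsf{real}}_i\varphi$ with $\alpha\in\mathcal{L}_0$. Semantics: $(S,U)\models\alpha$ iff $S\models\alpha$; Boolean clauses as usual; $(S,U)\models\Box_i\varphi$ iff for all $S'\in U$ with $S\mathcal{E}_iS'$, $(S',U)\models\varphi$; $(S,U)\models\mathcal{A}_i\varphi$ iff for all $S'\in U$ with $(S',U)\models\varphi$, $S\mathcal{A}_iS'$; $(S,U)\models\mathcal{R}_i\varphi$ iff for all $S'\in U$ with $(S',U)\models\varphi$, $S\mathcal{R}_iS'$; $(S,U)\models\mathcal{A}^{\mathsf{real}}_i\varphi$ iff for all $S'\in U$ with $(S',U)\models\varphi$ and $S\mathcal{E}_iS'$, $S\mathcal{A}_iS'$; $(S,U)\models\mathcal{R}^{\mathsf{real}}_i\varphi$ iff for all $S'\in U$ with $(S',U)\models\varphi$ and $S\mathcal{E}_iS'$, $S\mathcal{R}_iS'$. A formula is valid ($\models\varphi$) if it is true in every model $(S,U)$. *)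

(* Defs.v *)
From mathcomp Require Import all_boot.

Set Implicit Arguments.
Unset Strict Implicit.

Definition agent (n : nat) := 'I_n.

Inductive atom (n : nat) : Type :=
| AOrd : nat -> atom n
| ARew : agent n -> atom n
| APun : agent n -> atom n.

Inductive form0 (n : nat) : Type :=
| F0Atom : atom n -> form0 n
| F0Neg  : form0 n -> form0 n
| F0And  : form0 n -> form0 n -> form0 n
| F0Expl : agent n -> form0 n -> form0 n.

Definition imp0 n (a b : form0 n) : form0 n := F0Neg (F0And a (F0Neg b)).

Record state (n : nat) : Type := mkState {
  base : agent n -> form0 n -> Prop;
  val  : atom n -> Prop
}.

Fixpoint sat0 n (S : state n) (a : form0 n) : Prop :=
  match a with
  | F0Atom p => val S p
  | F0Neg b => ~ sat0 S b
  | F0And b c => sat0 S b /\ sat0 S c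
  | F0Expl i b => base S i b
  end.

Definition Des n (i : agent n) (S : state n) (a : form0 n) : Prop :=
  base S i (imp0 a (F0Atom (ARew i))).
Definition Und n (i : agent n) (S : state n) (a : form0 n) : Prop :=
  base S i (imp0 a (F0Atom (APun i))).

Definition relE n (i : agent n) (S S' : state n) : Prop :=
  forall a, base S i a -> sat0 S' a.
Definition relA n (i : agent n) (S S' : state n) : Prop :=
  exists a, Des i S a /\ sat0 S' a.
Definition relR n (i : agent n) (S S' : state n) : Prop :=
  exists a, Und i S a /\ sat0 S' a.

Inductive form (n : nat) : Type :=
| FBase  : form0 n -> form n
| FNeg   : form n -> form n
| FAnd   : form n -> form n -> form n
| FBox   : agent n -> form n -> form n
| FA     : agent n -> form n -> form n
| FR     : agent n -> form n -> form n
| FAreal : agent n -> form n -> form n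
| FRreal : agent n -> form n -> form n.

Definition fimp n (a b : form n) : form n := FNeg (FAnd a (FNeg b)).
Definition fiff n (a b : form n) : form n := FAnd (fimp a b) (fimp b a).

Fixpoint sat n (U : state n -> Prop) (S : state n) (f : form n) : Prop :=
  match f with
  | FBase a => sat0 S a
  | FNeg g => ~ sat U S g
  | FAnd g h => sat U S g /\ sat U S h
  | FBox i g => forall S', U S' -> relE i S S' -> sat U S' g
  | FA i g => forall S', U S' -> sat U S' g -> relA i S S'
  | FR i g => forall S', U S' -> sat U S' g -> relR i S S'
  | FAreal i g => forall S', U S' -> sat U S' g -> relE i S S' -> relA i S S'
  | FRreal i g => forall S', U S' -> sat U S' g -> relE i S S' -> relR i S S'
  end.

Definition valid n (f : form n) : Prop :=
  forall (U : state n -> Prop) (S : state n), U S -> sat U S f.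

Inductive opkind : Type := KA | KR | KAreal | KRreal.

Definition op n (k : opkind) (i : agent n) (f : form n) : form n :=
  match k with
  | KA => FA i f
  | KR => FR i f
  | KAreal => FAreal i f
  | KRreal => FRreal i f
  end.

Fixpoint free_of n (k : opkind) (f : form n) : Prop :=
  match f with
  | FBase _ => True
  | FNeg g => free_of k g
  | FAnd g h => free_of k g /\ free_of k h
  | FBox _ g => free_of k g
  | FA _ g => k <> KA /\ free_of k g
  | FR _ g => k <> KR /\ free_of k g
  | FAreal _ g => k <> KAreal /\ free_of k g
  | FRreal _ g => k <> KRreal /\ free_of k g
  end.

(* Main.v *)
Require Import Defs.
From mathcomp Require Import all_boot.
From Stdlib Require Import Classical Lia Setoid.

Set Implicit Arguments.
Notation vl := Defs.val.
Unset Strict Implicit.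

Section Inv.
Variable n : nat.

Fixpoint ok0 (P : atom n -> Prop) (a : form0 n) : Prop :=
  match a with
  | F0Atom p => P p
  | F0Neg b => ok0 P b
  | F0And b c => ok0 P b /\ ok0 P c
  | F0Expl _ b => True
  end.

Fixpoint ok (P : atom n -> Prop) (f : form n) : Prop :=
  match f with
  | FBase a => ok0 P a
  | FNeg g => ok P g
  | FAnd g h => ok P g /\ ok P h
  | FBox _ g => ok P g
  | FA _ g => ok P g
  | FR _ g => ok P g
  | FAreal _ g => ok P g
  | FRreal _ g => ok P g
  end.

Definition zz (U1 U2 : state n -> Prop) (Z : state n -> state n -> Prop)
  (Rel : state n -> state n -> Prop) : Prop :=
  forall X Y, Z X Y ->
    (forall X', U1 X' -> Rel X X' -> exists Y', U2 Y' /\ Z X' Y' /\ Rel Y Y') /\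
    (forall Y', U2 Y' -> Rel Y Y' -> exists X', U1 X' /\ Z X' Y' /\ Rel X X').

Lemma sat0_inv (P : atom n -> Prop) (X Y : state n) :
  (forall a, P a -> (vl X a <-> vl Y a)) ->
  (forall j b, base X j b <-> base Y j b) ->
  forall a, ok0 P a -> (sat0 X a <-> sat0 Y a).
Proof.
  intros Hv Hb a; induction a as [p|b IH|b IHb c IHc|j b IH]; simpl; intros Hok.
  - apply Hv; exact Hok.
  - rewrite (IH Hok); tauto.
  - destruct Hok as [H1 H2]; rewrite (IHb H1) (IHc H2); tauto.
  - apply Hb.
Qed.

Lemma sat_inv (k : opkind) (U1 U2 : state n -> Prop) (Z : state n -> state n -> Prop)
  (P : atom n -> Prop)
  (HZ : forall X Y, Z X Y -> (forall a, P a -> (vl X a <-> vl Y a)) /\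
                             (forall j b, base X j b <-> base Y j b))
  (HE : forall j, zz U1 U2 Z (fun X Y => relE j X Y))
  (HA : k <> KA -> forall j, zz U1 U2 Z (fun X Y => ~ relA j X Y))
  (HR : k <> KR -> forall j, zz U1 U2 Z (fun X Y => ~ relR j X Y))
  (HAr : k <> KAreal -> forall j, zz U1 U2 Z (fun X Y => relE j X Y /\ ~ relA j X Y))
  (HRr : k <> KRreal -> forall j, zz U1 U2 Z (fun X Y => relE j X Y /\ ~ relR j X Y)) :
  forall phi, free_of k phi -> ok P phi ->
    forall X Y, Z X Y -> (sat U1 X phi <-> sat U2 Y phi).
Proof.
  intros phi; induction phi as [a|g IH|g IHg h IHh|j g IH|j g IH|j g IH|j g IH|j g IH];
    simpl; intros Hf Hok X Y HXY.
  - destruct (HZ _ _ HXY) as [H1 H2]; apply (sat0_inv H1 H2); exact Hok.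
  - rewrite (IH Hf Hok X Y HXY); tauto.
  - destruct Hf as [Hf1 Hf2]; destruct Hok as [Ho1 Ho2].
    rewrite (IHg Hf1 Ho1 X Y HXY) (IHh Hf2 Ho2 X Y HXY); tauto.
  - destruct (HE j X Y HXY) as [Hfw Hbk]. split.
    + intros H Y' HY' HE'. destruct (Hbk Y' HY' HE') as [X' [HX' [HZ' HR']]].
      apply (IH Hf Hok X' Y' HZ'). apply H; auto.
    + intros H X' HX' HE'. destruct (Hfw X' HX' HE') as [Y' [HY' [HZ' HR']]].
      apply (IH Hf Hok X' Y' HZ'). apply H; auto.
  - destruct Hf as [Hk Hf]. destruct (HA Hk j X Y HXY) as [Hfw Hbk]. split.
    + intros H Y' HY' Hg. apply NNPP; intro Hn.
      destruct (Hbk Y' HY' Hn) as [X' [HX' [HZ' HR']]].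
      apply HR'. apply H; auto. apply (IH Hf Hok X' Y' HZ'); auto.
    + intros H X' HX' Hg. apply NNPP; intro Hn.
      destruct (Hfw X' HX' Hn) as [Y' [HY' [HZ' HR']]].
      apply HR'. apply H; auto. apply (IH Hf Hok X' Y' HZ'); auto.
  - destruct Hf as [Hk Hf]. destruct (HR Hk j X Y HXY) as [Hfw Hbk]. split.
    + intros H Y' HY' Hg. apply NNPP; intro Hn.
      destruct (Hbk Y' HY' Hn) as [X' [HX' [HZ' HR']]].
      apply HR'. apply H; auto. apply (IH Hf Hok X' Y' HZ'); auto.
    + intros H X' HX' Hg. apply NNPP; intro Hn.
      destruct (Hfw X' HX' Hn) as [Y' [HY' [HZ' HR']]].
      apply HR'. apply H; auto. apply (IH Hf Hok X' Y' HZ'); auto.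
  - destruct Hf as [Hk Hf]. destruct (HAr Hk j X Y HXY) as [Hfw Hbk]. split.
    + intros H Y' HY' Hg HEY. apply NNPP; intro Hn.
      destruct (Hbk Y' HY' (conj HEY Hn)) as [X' [HX' [HZ' [HE2 HR']]]].
      apply HR'. apply H; auto. apply (IH Hf Hok X' Y' HZ'); auto.
    + intros H X' HX' Hg HEX. apply NNPP; intro Hn.
      destruct (Hfw X' HX' (conj HEX Hn)) as [Y' [HY' [HZ' [HE2 HR']]]].
      apply HR'. apply H; auto. apply (IH Hf Hok X' Y' HZ'); auto.
  - destruct Hf as [Hk Hf]. destruct (HRr Hk j X Y HXY) as [Hfw Hbk]. split.
    + intros H Y' HY' Hg HEY. apply NNPP; intro Hn.
      destruct (Hbk Y' HY' (conj HEY Hn)) as [X' [HX' [HZ' [HE2 HR']]]].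
      apply HR'. apply H; auto. apply (IH Hf Hok X' Y' HZ'); auto.
    + intros H X' HX' Hg HEX. apply NNPP; intro Hn.
      destruct (Hfw X' HX' (conj HEX Hn)) as [Y' [HY' [HZ' [HE2 HR']]]].
      apply HR'. apply H; auto. apply (IH Hf Hok X' Y' HZ'); auto.
Qed.

End Inv.

Section Models.
Variable n : nat.

Fixpoint bd0 (a : form0 n) : nat :=
  match a with
  | F0Atom (AOrd m) => m
  | F0Atom _ => 0
  | F0Neg b => bd0 b
  | F0And b c => Nat.max (bd0 b) (bd0 c)
  | F0Expl _ _ => 0
  end.

Fixpoint bd (f : form n) : nat :=
  match f with
  | FBase a => bd0 a
  | FNeg g => bd g
  | FAnd g h => Nat.max (bd g) (bd h)
  | FBox _ g => bd g
  | FA _ g => bd g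
  | FR _ g => bd g
  | FAreal _ g => bd g
  | FRreal _ g => bd g
  end.

Definition Pb (B : nat) : atom n -> Prop := fun x => forall m, x = AOrd n m -> le m B.

Lemma ok0_bd a : forall B, le (bd0 a) B -> ok0 (Pb B) a.
Proof.
  induction a as [p|b IH|b IHb c IHc|j b IH]; simpl; intros B HB.
  - destruct p as [m| |]; intros m0 E; inversion E; subst; simpl in HB; lia.
  - auto.
  - split; [apply IHb|apply IHc]; lia.
  - exact I.
Qed.

Lemma ok_bd f : forall B, le (bd f) B -> ok (Pb B) f.
Proof.
  induction f; simpl; intros B HB; try (apply ok0_bd; lia); try (apply IHf; lia).
  split; [apply IHf1|apply IHf2]; lia.
Qed.

Lemma ok_true (f : form n) : ok (fun _ => True) f.
Proof.
  induction f; simpl; auto.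
  induction f; simpl; auto.
Qed.

Definition tgt (c : bool) (j : agent n) : atom n := if c then ARew j else APun j.

Definition Sg (x y : atom n) (c : bool) : state n :=
  mkState (fun j f => f = imp0 (F0Atom x) (F0Atom (tgt c j)) \/ f = F0Neg (F0Atom y))
          (fun _ => False).

Definition Te (v : atom n -> Prop) : state n := mkState (fun _ _ => False) v.

Lemma Sg_E x y c j X : relE j (Sg x y c) X <->
  (~ (vl X x /\ ~ vl X (tgt c j)) /\ ~ vl X y).
Proof.
  unfold relE; simpl; split.
  - intros H; split; [apply (H (imp0 (F0Atom x) (F0Atom (tgt c j)))) | apply (H (F0Neg (F0Atom y)))]; auto.
  - intros [H1 H2] a [-> | ->]; simpl; auto.
Qed.

Lemma Sg_A x y c j X : relA j (Sg x y c) X <-> (c = true /\ vl X x).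
Proof.
  unfold relA, Des; simpl; split.
  - intros [a [[Ha|Ha] Hs]].
    + unfold imp0 in Ha. injection Ha; intros H1 H2. destruct c; simpl in H1; [|discriminate].
      subst; auto.
    + discriminate.
  - intros [-> Hx]. exists (F0Atom x). split; [left; reflexivity | exact Hx].
Qed.

Lemma Sg_R x y c j X : relR j (Sg x y c) X <-> (c = false /\ vl X x).
Proof.
  unfold relR, Und; simpl; split.
  - intros [a [[Ha|Ha] Hs]].
    + unfold imp0 in Ha. injection Ha; intros H1 H2. destruct c; simpl in H1; [discriminate|].
      subst; auto.
    + discriminate.
  - intros [-> Hx]. exists (F0Atom x). split; [left; reflexivity | exact Hx].
Qed.

Lemma Te_E v j X : relE j (Te v) X <-> True.
Proof. unfold relE; simpl; split; auto; intros _ a []. Qed.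
Lemma Te_A v j X : relA j (Te v) X <-> False.
Proof. unfold relA, Des; simpl; split; [intros [a [[] _]] | intros []]. Qed.
Lemma Te_R v j X : relR j (Te v) X <-> False.
Proof. unfold relR, Und; simpl; split; [intros [a [[] _]] | intros []]. Qed.

End Models.

Definition SA n c := Sg (AOrd n 0) (AOrd n 0) c.
Definition DA n := Te (fun a : atom n => a = AOrd n 0).

Ltac dj := solve [ reflexivity | (left; dj) | (right; dj) | (split; dj) ].
Ltac brk := repeat match goal with
  | H : _ \/ _ |- _ => destruct H
  | H : _ /\ _ |- _ => destruct H
  | H : exists _, _ |- _ => destruct H end.
Ltac rw1 := first [ setoid_rewrite Sg_E | setoid_rewrite Sg_A | setoid_rewrite Sg_R
                  | setoid_rewrite Te_E | setoid_rewrite Te_A | setoid_rewrite Te_R ].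
Ltac rwh H := first [ setoid_rewrite Sg_E in H | setoid_rewrite Sg_A in H | setoid_rewrite Sg_R in H
                  | setoid_rewrite Te_E in H | setoid_rewrite Te_A in H | setoid_rewrite Te_R in H ].
Ltac relnorm := unfold SA, DA in *; repeat rw1;
  repeat match goal with H : _ |- _ => rwh H end; simpl in *.
Ltac relsolve := relnorm; intuition (try lia; try discriminate; try congruence).

Lemma case_A n (i : agent n) (c : bool) (k : opkind) (phi : form n) :
  (c = false -> k = KA) -> (c = true -> k = KR) ->
  free_of k phi ->
  ~ valid (fiff (op k i (FBase (F0Atom (AOrd n 0)))) phi).
Proof.
  intros Hc1 Hc2 Hf Hv.
  pose U1 := fun X => X = SA n c.
  pose U2 := fun X => X = SA n c \/ X = DA n.
  pose Z := fun X Y => X = SA n c /\ Y = SA n c.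
  have inv : sat U1 (SA n c) phi <-> sat U2 (SA n c) phi.
  { apply (@sat_inv n k U1 U2 Z (fun _ => True)); try exact Hf; try apply ok_true;
      try (split; reflexivity).
    all: try (intros X Y [-> ->]; split; intros; reflexivity).
    all: destruct c; [have Ek := Hc2 erefl | have Ek := Hc1 erefl]; subst k.
    all: lazymatch goal with |- _ <> _ -> _ => intros Hk; try (exfalso; apply Hk; reflexivity) | _ => idtac end.
    all: intros j; unfold zz; intros X Y HZ; cbv beta in *; unfold U1, U2, Z in *; brk; subst;
            split; intros W HW HR; brk; subst.
    all: try solve [exfalso; relsolve].
    all: try solve [exists (SA n true); split; [dj | split; [dj | solve [assumption | relsolve]]]].
    all: try solve [exists (SA n false); split; [dj | split; [dj | solve [assumption | relsolve]]]].
  }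
  have h1 := Hv U1 (SA n c) erefl.
  have h2 := Hv U2 (SA n c) (or_introl erefl).
  destruct c; [have Ek := Hc2 erefl | have Ek := Hc1 erefl]; subst k; simpl in h1, h2.
  - have A1 : forall S', U1 S' -> vl S' (AOrd n 0) -> relR i (SA n true) S'.
    { intros S' HS Hp; unfold U1 in HS; subst; relsolve. }
    have A2 : ~ (forall S', U2 S' -> vl S' (AOrd n 0) -> relR i (SA n true) S').
    { intros H; have HH := H (DA n) (or_intror erefl) erefl; relsolve. }
    tauto.
  - have A1 : forall S', U1 S' -> vl S' (AOrd n 0) -> relA i (SA n false) S'.
    { intros S' HS Hp; unfold U1 in HS; subst; relsolve. }
    have A2 : ~ (forall S', U2 S' -> vl S' (AOrd n 0) -> relA i (SA n false) S').
    { intros H; have HH := H (DA n) (or_intror erefl) erefl; relsolve. }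
    tauto.
Qed.

Definition vT n (c : bool) (f : nat -> Prop) : atom n -> Prop :=
  fun a => match a with AOrd m => f m | ARew _ => c = true | APun _ => c = false end.
Definition SR n B c := Sg (AOrd n B.+1) (AOrd n B.+2) c.
Definition T1 n B c := Te (@vT n c (fun m => m = 0 \/ m = B.+1)).
Definition T2 n c := Te (@vT n c (fun m => m = 0)).
Definition T3 n B c := Te (@vT n c (fun m => m = 0 \/ m = B.+2)).

Lemma TeE n v (j : agent n) X : relE j (Te v) X.
Proof. intros a []. Qed.
Lemma notTeA n v (j : agent n) X : ~ relA j (Te v) X.
Proof. intros [a [[] _]]. Qed.
Lemma notTeR n v (j : agent n) X : ~ relR j (Te v) X.
Proof. intros [a [[] _]]. Qed.

Ltac fin B :=
  assert (f1 : B.+1 <> 0) by lia; assert (f2 : B.+2 <> 0) by lia; assert (f3 : B.+2 <> B.+1) by lia;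
  assert (f4 : B.+1 <> B.+2) by lia; assert (f5 : true <> false) by discriminate;
  assert (f6 : false <> true) by discriminate;
  assert (e1 : (0 = 0)%coq_nat) by reflexivity; assert (e2 : B.+1 = B.+1) by reflexivity;
  assert (e3 : B.+2 = B.+2) by reflexivity; assert (e4 : true = true) by reflexivity;
  assert (e5 : false = false) by reflexivity; tauto.

Ltac hnorm H := match type of H with
  | _ /\ _ => let H1 := fresh in let H2 := fresh in destruct H as [H1 H2]; hnorm H1; hnorm H2
  | relE _ (Te _) _ => clear H
  | ~ relA _ (Te _) _ => clear H
  | ~ relR _ (Te _) _ => clear H
  | relA _ (Te _) _ => destruct (notTeA H)
  | relR _ (Te _) _ => destruct (notTeR H)
  | relE _ (Sg _ _ _) _ => apply (proj1 (Sg_E _ _ _ _ _)) in H; simpl in H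
  | relA _ (Sg _ _ _) _ => apply (proj1 (Sg_A _ _ _ _ _)) in H; simpl in H
  | relR _ (Sg _ _ _) _ => apply (proj1 (Sg_R _ _ _ _ _)) in H; simpl in H
  | ~ relA _ (Sg _ _ _) _ => let H' := fresh in
        assert (H' := fun h => H (proj2 (Sg_A _ _ _ _ _) h)); clear H; simpl in H'
  | ~ relR _ (Sg _ _ _) _ => let H' := fresh in
        assert (H' := fun h => H (proj2 (Sg_R _ _ _ _ _) h)); clear H; simpl in H'
  end.

Ltac g1 B := match goal with
  | |- relE _ (Te _) _ => apply TeE
  | |- ~ relA _ (Te _) _ => apply notTeA
  | |- ~ relR _ (Te _) _ => apply notTeR
  | |- relE _ (Sg _ _ _) _ => apply (proj2 (Sg_E _ _ _ _ _)); simpl; fin B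
  | |- relA _ (Sg _ _ _) _ => apply (proj2 (Sg_A _ _ _ _ _)); simpl; fin B
  | |- relR _ (Sg _ _ _) _ => apply (proj2 (Sg_R _ _ _ _ _)); simpl; fin B
  | |- ~ relA _ (Sg _ _ _) _ => let h := fresh in intro h;
        apply (proj1 (Sg_A _ _ _ _ _)) in h; simpl in h; fin B
  | |- ~ relR _ (Sg _ _ _) _ => let h := fresh in intro h;
        apply (proj1 (Sg_R _ _ _ _ _)) in h; simpl in h; fin B
  | |- _ /\ _ => split; g1 B
  end.

Ltac tryw C tac := exists C; split; [dj | split; [dj | tac]].
Ltac cands n B tac := first [ solve [tryw (SR n B true) tac] | solve [tryw (SR n B false) tac]
  | solve [tryw (T1 n B true) tac] | solve [tryw (T1 n B false) tac]
  | solve [tryw (T2 n true) tac] | solve [tryw (T2 n false) tac]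
  | solve [tryw (T3 n B true) tac] | solve [tryw (T3 n B false) tac] ].

Lemma case_R n (i : agent n) (c : bool) (k : opkind) (phi : form n) (B : nat) :
  le (bd phi) B ->
  (c = true -> k = KAreal) -> (c = false -> k = KRreal) ->
  free_of k phi ->
  ~ valid (fiff (op k i (FBase (F0Atom (AOrd n 0)))) phi).
Proof.
  intros HB Hc1 Hc2 Hf Hv.
  pose U1 := fun X => X = SR n B c \/ X = T1 n B c \/ X = T3 n B c.
  pose U2 := fun X => X = SR n B c \/ X = T1 n B c \/ X = T2 n c \/ X = T3 n B c.
  pose Z := fun X Y => (X = SR n B c /\ Y = SR n B c) \/ (X = T1 n B c /\ Y = T1 n B c)
     \/ (X = T3 n B c /\ Y = T3 n B c) \/ (X = T1 n B c /\ Y = T2 n c)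
     \/ (X = T3 n B c /\ Y = T2 n c).
  have inv : sat U1 (SR n B c) phi <-> sat U2 (SR n B c) phi.
  { apply (@sat_inv n k U1 U2 Z (Pb B)); try exact Hf; try (apply ok_bd; exact HB);
      try (left; split; reflexivity).
    1: { intros X Y HZ; unfold Z in HZ; brk; subst; (split;
         [ intros a Ha; unfold SR, T1, T2, T3; destruct a as [m| |]; simpl; try tauto
         | intros; unfold SR, T1, T2, T3; simpl; try tauto ]).
         all: have := Ha m erefl; lia. }
    all: destruct c; [have Ek := Hc1 erefl | have Ek := Hc2 erefl]; subst k.
    all: lazymatch goal with |- _ <> _ -> _ => intros Hk; try (exfalso; apply Hk; reflexivity) | _ => idtac end.
    all: intros j; unfold zz; intros X Y HZ; cbv beta in *; unfold U1, U2, Z in *; brk; subst;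
            split; intros W HW HR; repeat (destruct HW as [HW|HW]; [subst W|]); try subst W.
    all: try cands n B assumption.
    all: try solve [exfalso; clear -HR; unfold SR, T1, T2, T3 in HR; hnorm HR; fin B].
    all: try cands n B ltac:(clear -HR; unfold SR, T1, T2, T3; g1 B).
  }
  have h1 := Hv U1 (SR n B c) (or_introl erefl).
  have h2 := Hv U2 (SR n B c) (or_introl erefl).
  clear Hv Hf.
  destruct c; [have Ek := Hc1 erefl | have Ek := Hc2 erefl]; subst k; simpl in h1, h2.
  - have A1 : forall S', U1 S' -> vl S' (AOrd n 0) -> relE i (SR n B true) S' -> relA i (SR n B true) S'.
    { intros S' HS Hp HE; destruct HS as [->|[->| ->]]; unfold SR, T1, T3 in *;
      first [ solve [simpl in Hp; destruct Hp] | solve [g1 B] | solve [exfalso; hnorm HE; fin B] ]. }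
    have A2 : ~ (forall S', U2 S' -> vl S' (AOrd n 0) -> relE i (SR n B true) S' -> relA i (SR n B true) S').
    { intros H. have HH := H (T2 n true) ltac:(dj) erefl ltac:(unfold SR, T2; g1 B).
      unfold SR, T2 in HH; hnorm HH; fin B. }
    tauto.
  - have A1 : forall S', U1 S' -> vl S' (AOrd n 0) -> relE i (SR n B false) S' -> relR i (SR n B false) S'.
    { intros S' HS Hp HE; destruct HS as [->|[->| ->]]; unfold SR, T1, T3 in *;
      first [ solve [simpl in Hp; destruct Hp] | solve [g1 B] | solve [exfalso; hnorm HE; fin B] ]. }
    have A2 : ~ (forall S', U2 S' -> vl S' (AOrd n 0) -> relE i (SR n B false) S' -> relR i (SR n B false) S').
    { intros H. have HH := H (T2 n false) ltac:(dj) erefl ltac:(unfold SR, T2; g1 B).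
      unfold SR, T2 in HH; hnorm HH; fin B. }
    tauto.
Qed.

Theorem theorem1 (n : nat) (i : agent n) (k : opkind) :
  exists p : atom n,
    forall phi : form n, free_of k phi ->
      ~ valid (fiff (op k i (FBase (F0Atom p))) phi).
Proof.
  exists (AOrd n 0). intros phi Hf.
  destruct k.
  - apply (@case_A n i false KA phi); auto; discriminate.
  - apply (@case_A n i true KR phi); auto; discriminate.
  - apply (@case_R n i true KAreal phi (bd phi)); auto; discriminate.
  - apply (@case_R n i false KRreal phi (bd phi)); auto; discriminate.
Qed.
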